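(* Suppose $n\ge3$. For $i\ne j$ define $a_i=\frac{(n-1)(1-\omega_i)\eta}{n}$, $a_{ij}=a_i+a_j$, $$h_{ij}=\begin{cases}\frac{(n-1)\eta}{n}\big[(1-\omega_i)^2+\frac{\omega_i(\omega_j-\omega_i)}{n}\big] & \text{if } r_i<a_i,\\ (1-\omega_i)\eta\big[\frac{1-\omega_i}{n}+\frac{n-2}{n-1}\big]+\frac{\omega_i(n-1)(\omega_j-\omega_i)\eta}{n^2} & \text{if } r_i\in[a_i,a_{ij}),\\ \frac{(n-1)\eta}{n}\big[1-\omega_i+\frac{\omega_j-\omega_i}{n}\big] & \text{if } r_i\ge a_{ij},\end{cases}$$ and $c_{ij}=\min\big\{h_{ij}+h_{ji},\ 1-(a_i-h_{ij})I_{\{a_i>h_{ij}\}}-(a_j-h_{ji})I_{\{a_j>h_{ji}\}}\big\}$ ($I$ the indicator function). For any constant $\varepsilon>0$ let $c_\varepsilon=\max_{i\ne j}c_{ij}-\varepsilon$. Then the set $E_{c_\varepsilon}=\{(x_1,\dots,x_n)\in[0,1]^n:\max_{i,j}|x_i-x_j|\ge c_\varepsilon\}$ is finite-time robustly reachable from $[0,1]^n$ under control protocol (C6).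
   Context: $\mathcal V=\{1,\dots,n\}$, confidence thresholds $r_i\in(0,1]$, belief factors $\omega_i\in(0,1)$, $\eta>0$. States $x(t)\in[0,1]^n$. Neighbor set $\mathcal N_i(t)=\{j:|x_j(t)-x_i(t)|\le r_i\}$ (contains $i$), $\Pi_{[0,1]}(y)=\min\{1,\max\{0,y\}\}$, $x_{\rm ave}(t)=\frac1n\sum_ix_i(t)$. Control protocol (C6): $x_i(t+1)=\Pi_{[0,1]}\big(\omega_ix_{\rm ave}(t)+\frac{1-\omega_i}{|\mathcal N_i(t)|}[x_i(t)+\sum_{j\in\mathcal N_i(t)\setminus\{i\}}(x_j(t)+u_{ji}(t)+b_{ji}(t))]\big)$, where for $j\in\mathcal N_i(t)\setminus\{i\}$: $\delta_i(t)\in(0,\eta)$ is a chosen parameter, $u_{ji}(t)\in[-\eta+\delta_i(t),\eta-\delta_i(t)]$ a chosen control input, $b_{ji}(t)\in[-\delta_i(t),\delta_i(t)]$ an arbitrary uncertainty; the choices may depend on $x(0),\dots,x(t)$. A set $S\subseteq[0,1]^n$ is finite-time robustly reachable from $[0,1]^n$ under the protocol if there exist constants $T>0$ and $\varepsilon'\in(0,\eta)$ such that for every $x(0)\in[0,1]^n$, either $x(0)\in S$, or one can choose $\delta_i(t)\in[\varepsilon',\eta)$ and $u_{ji}(t)\in[-\eta+\delta_i(t),\eta-\delta_i(t)]$ ($0\le t<T$, $i\in\mathcal V$, $j\in\mathcal N_i(t)\setminus\{i\}$) guaranteeing that for arbitrary $b_{ji}(t)\in[-\delta_i(t),\delta_i(t)]$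 there is $t\in[1,T]$ with $x(t)\in S$. *)

(* Defs.v *)
From Stdlib Require Import Reals Lra List Arith.
Import ListNotations.
Open Scope R_scope.

(* A state x(t) in R^n, represented as a function on indices; only the
   indices 0..n-1 (agents 1..n of the paper) are meaningful. *)
Definition state := nat -> R.

Definition proj01 (y : R) : R := Rmin 1 (Rmax 0 y).

Definition Rsum (l : list R) : R := fold_right Rplus 0 l.

Definition in01n (n : nat) (x : state) : Prop :=
  forall i, (i < n)%nat -> 0 <= x i <= 1.

Definition xave (n : nat) (x : state) : R := Rsum (map x (seq 0 n)) / INR n.

Definition is_nbr (r : nat -> R) (x : state) (i j : nat) : bool :=
  if Rle_dec (Rabs (x j - x i)) (r i) then true else false.

Definition nbrs (n : nat) (r : nat -> R) (x : state) (i : nat) : list nat :=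
  filter (is_nbr r x i) (seq 0 n).

Definition nbrs' (n : nat) (r : nat -> R) (x : state) (i : nat) : list nat :=
  filter (fun j => negb (Nat.eqb j i)) (nbrs n r x i).

(* One step of protocol (C6); u j i = u_{ji}(t), b j i = b_{ji}(t). *)
Definition step (n : nat) (w r : nat -> R) (x : state) (u b : nat -> nat -> R)
  : state := fun i =>
  proj01 (w i * xave n x
          + (1 - w i) / INR (length (nbrs n r x i))
            * (x i + Rsum (map (fun j => x j + u j i + b j i) (nbrs' n r x i)))).

(* The control u(t) = ctrl (traj_hist t) may depend on x(0),...,x(t);
   the uncertainty sequence is b t j i = b_{ji}(t). *)
Fixpoint traj_hist (n : nat) (w r : nat -> R) (x0 : state)
  (ctrl : list state -> nat -> nat -> R) (b : nat -> nat -> nat -> R) (t : nat)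
  : list state :=
  match t with
  | O => [x0]
  | S t' => let h := traj_hist n w r x0 ctrl b t' in
            step n w r (hd x0 h) (ctrl h) (b t') :: h
  end.

Definition traj n w r x0 ctrl b t : state := hd x0 (traj_hist n w r x0 ctrl b t).

(* Finite-time robust reachability from [0,1]^n under (C6).
   delta h i = delta_i(t), ctrl h j i = u_{ji}(t) where h is the history
   x(t),...,x(0).  Validity of the controller choices is required on every
   history (equivalent to requiring it on realized histories, since values on
   other histories are irrelevant and valid values always exist). *)
Definition robustly_reachable (n : nat) (w r : nat -> R) (eta : R)
  (S : state -> Prop) : Prop :=
  exists (T : nat) (eps' : R),
    (0 < T)%nat /\ 0 < eps' < eta /\
    forall x0 : state, in01n n x0 ->
      S x0 \/
      exists (delta : list state -> nat -> R)
             (ctrl : list state -> nat -> nat -> R),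
        (forall h i, (i < n)%nat -> eps' <= delta h i < eta) /\
        (forall h i j, (i < n)%nat -> (j < n)%nat ->
            - (eta - delta h i) <= ctrl h j i <= eta - delta h i) /\
        forall b : nat -> nat -> nat -> R,
          (forall t i j, (t < T)%nat -> (i < n)%nat ->
             In j (nbrs' n r (traj n w r x0 ctrl b t) i) ->
             - delta (traj_hist n w r x0 ctrl b t) i <= b t j i
               <= delta (traj_hist n w r x0 ctrl b t) i) ->
          exists t, (1 <= t <= T)%nat /\ S (traj n w r x0 ctrl b t).

Definition a_ (n : nat) (w : nat -> R) (eta : R) (i : nat) : R :=
  (INR n - 1) * (1 - w i) * eta / INR n.

Definition aa_ n w eta i j : R := a_ n w eta i + a_ n w eta j.

Definition h_ (n : nat) (w r : nat -> R) (eta : R) (i j : nat) : R :=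
  let nn := INR n in
  if Rlt_dec (r i) (a_ n w eta i) then
    (nn - 1) * eta / nn * ((1 - w i) ^ 2 + w i * (w j - w i) / nn)
  else if Rlt_dec (r i) (aa_ n w eta i j) then
    (1 - w i) * eta * ((1 - w i) / nn + (nn - 2) / (nn - 1))
    + w i * (nn - 1) * (w j - w i) * eta / (nn ^ 2)
  else
    (nn - 1) * eta / nn * (1 - w i + (w j - w i) / nn).

Definition excess (a h : R) : R := if Rlt_dec h a then a - h else 0.

Definition c_ (n : nat) (w r : nat -> R) (eta : R) (i j : nat) : R :=
  Rmin (h_ n w r eta i j + h_ n w r eta j i)
       (1 - excess (a_ n w eta i) (h_ n w r eta i j)
          - excess (a_ n w eta j) (h_ n w r eta j i)).

(* max_{i <> j} c_ij  (indices 0..n-1; the list is nonempty for n >= 2) *)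
Definition cmax (n : nat) (w r : nat -> R) (eta : R) : R :=
  fold_right Rmax (c_ n w r eta 0 1)
    (flat_map (fun i => map (fun j => c_ n w r eta i j)
                          (filter (fun j => negb (Nat.eqb j i)) (seq 0 n)))
              (seq 0 n)).

Definition maxdiff (n : nat) (x : state) : R :=
  fold_right Rmax 0
    (flat_map (fun i => map (fun j => Rabs (x i - x j)) (seq 0 n)) (seq 0 n)).

Definition E_set (n : nat) (c : R) : state -> Prop :=
  fun x => in01n n x /\ maxdiff n x >= c.

(* Main.v *)
Require Import Defs.
From Stdlib Require Import Reals List Arith.
From Stdlib Require Import Lra Lia FunctionalExtensionality.
Import ListNotations.
Open Scope R_scope.


Definition Sn (n : nat) (F : nat -> R) : R := Rsum (map F (seq 0 n)).
Definition ind (b : bool) : R := if b then 1 else 0.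

Lemma Rsum_app l1 l2 : Rsum (l1 ++ l2) = Rsum l1 + Rsum l2.
Proof. induction l1; simpl; [lra|rewrite IHl1; lra]. Qed.

Lemma Sn_S n F : Sn (S n) F = Sn n F + F n.
Proof. unfold Sn. rewrite seq_S, map_app, Rsum_app. simpl. lra. Qed.

Lemma Sn_ext n F G : (forall k, (k < n)%nat -> F k = G k) -> Sn n F = Sn n G.
Proof.
  induction n; intros H; [reflexivity|]. rewrite !Sn_S, IHn by (intros; apply H; lia).
  rewrite H by lia. reflexivity.
Qed.

Lemma Sn_le n F G : (forall k, (k < n)%nat -> F k <= G k) -> Sn n F <= Sn n G.
Proof.
  induction n; intros H; [unfold Sn; simpl; lra|]. rewrite !Sn_S.
  assert (Sn n F <= Sn n G) by (apply IHn; intros; apply H; lia).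
  assert (F n <= G n) by (apply H; lia). lra.
Qed.

Lemma Sn_plus n F G : Sn n (fun k => F k + G k) = Sn n F + Sn n G.
Proof. induction n; [unfold Sn; simpl; lra|]. rewrite !Sn_S, IHn. lra. Qed.

Lemma Sn_scal n c F : Sn n (fun k => c * F k) = c * Sn n F.
Proof. induction n; [unfold Sn; simpl; lra|]. rewrite !Sn_S, IHn. lra. Qed.

Lemma Sn_const n c : Sn n (fun _ => c) = INR n * c.
Proof. induction n; [unfold Sn; simpl; lra|]. rewrite !Sn_S, IHn, S_INR. lra. Qed.

Lemma Sn_zero n F : (forall k, (k < n)%nat -> F k = 0) -> Sn n F = 0.
Proof. intros H. rewrite (Sn_ext n F (fun _ => 0)) by auto. rewrite Sn_const. lra. Qed.

Lemma Sn_ind n i : (i < n)%nat -> Sn n (fun k => ind (k =? i)%nat) = 1.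
Proof.
  induction n; intros Hi; [lia|]. rewrite Sn_S.
  destruct (Nat.eq_dec i n).
  - subst. rewrite Sn_zero. unfold ind. rewrite Nat.eqb_refl. lra.
    intros k Hk. unfold ind. destruct (Nat.eqb_spec k n); [lia|reflexivity].
  - rewrite IHn by lia. unfold ind. destruct (Nat.eqb_spec n i); [lia|lra].
Qed.

Lemma Sn_lin3 n i j al be ga : (i < n)%nat -> (j < n)%nat ->
  Sn n (fun k => al + be * ind (k =? i)%nat + ga * ind (k =? j)%nat)
  = INR n * al + be + ga.
Proof.
  intros Hi Hj. rewrite Sn_plus, Sn_plus, Sn_const, Sn_scal, Sn_scal, Sn_ind, Sn_ind by auto.
  lra.
Qed.

Lemma Rsum_filter (F : nat -> R) p l :
  Rsum (map F (filter p l)) = Rsum (map (fun k => if p k then F k else 0) l).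
Proof. induction l; simpl; [reflexivity|]. destruct (p a); simpl; rewrite IHl; lra. Qed.

Lemma len_filter (p : nat -> bool) (l : list nat) : INR (length (filter p l)) = Rsum (map (fun k => ind (p k)) l).
Proof.
  induction l; [reflexivity|]. cbn [filter map]. unfold ind at 1. destruct (p a).
  - cbn [length]. rewrite S_INR, IHl. unfold Rsum. simpl. lra.
  - rewrite IHl. unfold Rsum. simpl. lra.
Qed.

Lemma Rabs_le_iff y e : Rabs y <= e <-> - e <= y <= e.
Proof. unfold Rabs; destruct (Rcase_abs y); split; intros; lra. Qed.


Lemma P_in y : 0 <= proj01 y <= 1.
Proof. unfold proj01, Rmin, Rmax. repeat destruct Rle_dec; lra. Qed.
Lemma P_mono y y' : y <= y' -> proj01 y <= proj01 y'.
Proof. unfold proj01, Rmin, Rmax. repeat destruct Rle_dec; lra. Qed.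
Lemma P_up y d : 0 <= d -> proj01 (y + d) <= proj01 y + d.
Proof. unfold proj01, Rmin, Rmax. repeat destruct Rle_dec; lra. Qed.
Lemma P_dn y d : 0 <= d -> proj01 y - d <= proj01 (y - d).
Proof. unfold proj01, Rmin, Rmax. repeat destruct Rle_dec; lra. Qed.
Lemma P_near y z e : 0 <= z <= 1 -> Rabs (y - z) <= e -> Rabs (proj01 y - z) <= e.
Proof. rewrite !Rabs_le_iff. unfold proj01, Rmin, Rmax. repeat destruct Rle_dec; lra. Qed.

Definition arg n (w r : nat -> R) (x : state) (u b : nat -> nat -> R) i :=
  w i * xave n x + (1 - w i) / INR (length (nbrs n r x i))
            * (x i + Rsum (map (fun j => x j + u j i + b j i) (nbrs' n r x i))).

Lemma step_arg n w r x u b i : step n w r x u b i = proj01 (arg n w r x u b i).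
Proof. reflexivity. Qed.

Lemma is_nbr_self r x i : 0 <= r i -> is_nbr r x i i = true.
Proof. intros. unfold is_nbr. destruct Rle_dec as [|C]; auto. exfalso; apply C.
  replace (x i - x i) with 0 by ring. rewrite Rabs_R0. lra. Qed.

Lemma is_nbr_iff r x i k : is_nbr r x i k = true <-> Rabs (x k - x i) <= r i.
Proof. unfold is_nbr. destruct Rle_dec; split; intros; auto; discriminate. Qed.

Lemma arg_S n w r x u b i : 0 <= r i -> (i < n)%nat ->
  arg n w r x u b i = w i * (Sn n x / INR n) + (1 - w i) /
    Sn n (fun k => ind (is_nbr r x i k)) *
    Sn n (fun k => if is_nbr r x i k then (if (k =? i)%nat then x i else x k + u k i + b k i) else 0).
Proof.
  intros Hr Hi. unfold arg, xave, nbrs', nbrs. rewrite len_filter. fold (Sn n x).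
  rewrite Rsum_filter, Rsum_filter. fold (Sn n (fun k => ind (is_nbr r x i k))).
  f_equal. f_equal.
  change (Rsum (map ?F (seq 0 n))) with (Sn n F).
  replace (x i) with (Sn n (fun k => x i * ind (k =? i)%nat)) at 1
    by (rewrite Sn_scal, Sn_ind; auto; ring).
  rewrite <- Sn_plus. apply Sn_ext. intros k Hk. unfold ind.
  destruct (Nat.eqb_spec k i).
  - subst. rewrite is_nbr_self by auto. simpl. ring.
  - simpl. destruct (is_nbr r x i k); ring.
Qed.


Lemma Sn_abs n F G : (forall k, (k < n)%nat -> Rabs (F k) <= G k) -> Rabs (Sn n F) <= Sn n G.
Proof.
  intros H. apply Rabs_le_iff. split.
  - replace (- Sn n G) with (Sn n (fun k => -1 * G k)) by (rewrite Sn_scal; ring).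
    apply Sn_le. intros k Hk. specialize (H k Hk). apply Rabs_le_iff in H. lra.
  - apply Sn_le. intros k Hk. specialize (H k Hk). apply Rabs_le_iff in H. lra.
Qed.

Lemma Sn_minus n F G : Sn n F - Sn n G = Sn n (fun k => F k - G k).
Proof.
  replace (fun k => F k - G k) with (fun k => F k + -1 * G k) by
    (apply FunctionalExtensionality.functional_extensionality; intros; ring).
  rewrite Sn_plus, Sn_scal. ring.
Qed.

Lemma Sn_ind_ge1 n i (p : nat -> bool) : (i < n)%nat -> p i = true ->
  1 <= Sn n (fun k => ind (p k)).
Proof.
  intros Hi Hp. rewrite <- (Sn_ind n i Hi). apply Sn_le. intros k Hk. unfold ind.
  destruct (Nat.eqb_spec k i); [subst; rewrite Hp; lra|]. destruct (p k); lra.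
Qed.

Lemma approx n w r x u b i z (p : nat -> bool) rho U e1 :
  0 <= r i -> (i < n)%nat -> 0 < w i < 1 ->
  (forall k, (k < n)%nat -> is_nbr r x i k = p k) ->
  (forall k, (k < n)%nat -> Rabs (x k - z k) <= rho) ->
  (forall k, (k < n)%nat -> k <> i -> p k = true -> Rabs (u k i + b k i - U) <= e1) ->
  0 <= rho -> 0 <= e1 ->
  Rabs (arg n w r x u b i - (w i * (Sn n z / INR n) + (1 - w i) / Sn n (fun k => ind (p k))
     * Sn n (fun k => if p k then (if (k =? i)%nat then z i else z k + U) else 0))) <= rho + e1.
Proof.
  intros Hr Hi Hw Hp Hx Hu Hrho He1.
  rewrite arg_S by auto.
  rewrite (Sn_ext n (fun k => ind (is_nbr r x i k)) (fun k => ind (p k)))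
    by (intros; rewrite Hp; auto).
  rewrite (Sn_ext n (fun k => if is_nbr r x i k then _ else 0)
      (fun k => if p k then (if (k =? i)%nat then x i else x k + u k i + b k i) else 0))
    by (intros; rewrite Hp; auto).
  assert (Hpi : p i = true) by (rewrite <- Hp by auto; apply is_nbr_self; auto).
  set (N := Sn n (fun k => ind (p k))).
  assert (HN : 1 <= N) by (apply Sn_ind_ge1 with i; auto).
  set (Q := Sn n (fun k => if p k then (if (k =? i)%nat then x i else x k + u k i + b k i) else 0)).
  set (Qz := Sn n (fun k => if p k then (if (k =? i)%nat then z i else z k + U) else 0)).
  assert (HQ : Rabs (Q - Qz) <= N * (rho + e1)).
  { unfold Q, Qz, N. rewrite Sn_minus, Rmult_comm, <- Sn_scal. apply Sn_abs. intros k Hk.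
    unfold ind. destruct (p k) eqn:E.
    - destruct (Nat.eqb_spec k i).
      + subst. specialize (Hx i Hi). lra.
      + specialize (Hx k Hk). specialize (Hu k Hk n0 E).
        apply Rabs_le_iff in Hx. apply Rabs_le_iff in Hu. apply Rabs_le_iff. lra.
    - rewrite Rminus_0_r, Rabs_R0. lra. }
  assert (HS : Rabs (Sn n x - Sn n z) <= INR n * rho).
  { rewrite Sn_minus, <- Sn_const. apply Sn_abs. auto. }
  assert (Hn : 0 < INR n) by (apply lt_0_INR; lia).
  apply Rabs_le_iff in HQ. apply Rabs_le_iff in HS. apply Rabs_le_iff.
  assert (E1 : w i * (Sn n x / INR n) - w i * (Sn n z / INR n) = w i * ((Sn n x - Sn n z) / INR n)) by (field; lra).
  assert (E2 : (1 - w i) / N * Q - (1 - w i) / N * Qz = (1 - w i) * ((Q - Qz) / N)) by (field; lra).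
  assert (B1 : - rho <= (Sn n x - Sn n z) / INR n <= rho).
  { split; [apply Rmult_le_reg_r with (INR n); auto; field_simplify; lra|].
    apply Rmult_le_reg_r with (INR n); auto; field_simplify; lra. }
  assert (B2 : - (rho + e1) <= (Q - Qz) / N <= rho + e1).
  { split; apply Rmult_le_reg_r with N; try lra; field_simplify; lra. }
  split; nra.
Qed.


Lemma in_nbrs' n r x i k : In k (nbrs' n r x i) <-> ((k < n)%nat /\ is_nbr r x i k = true /\ k <> i).
Proof.
  unfold nbrs', nbrs. rewrite !filter_In, in_seq.
  destruct (Nat.eqb_spec k i); simpl; split; intros H.
  - destruct H as [_ H]; discriminate.
  - lia.
  - destruct H as [[H1 H2] _]. split; [lia|split; auto].
  - destruct H as [H1 [H2 _]]. split; [split; [lia|auto]|auto].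
Qed.

Lemma full_step n w r x u b i U dl :
  (i < n)%nat -> 0 <= r i -> 0 < w i < 1 -> 0 <= dl ->
  (forall k, (k < n)%nat -> is_nbr r x i k = true) ->
  (forall k, u k i = U) ->
  (forall k, In k (nbrs' n r x i) -> - dl <= b k i <= dl) ->
  Rabs (arg n w r x u b i - (Sn n x / INR n + (1 - w i) * (INR n - 1) / INR n * U)) <= dl.
Proof.
  intros Hi Hr Hw Hd Hnb Hu Hb.
  assert (Hn : 0 < INR n) by (apply lt_0_INR; lia).
  pose proof (approx n w r x u b i x (fun _ => true) 0 U dl Hr Hi Hw Hnb) as A.
  replace (0 + dl) with dl in A by ring. 
  replace (Sn n x / INR n + (1 - w i) * (INR n - 1) / INR n * U) with
   (w i * (Sn n x / INR n) + (1 - w i) / Sn n (fun _ => ind true) *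
       Sn n (fun k => if true then if (k =? i)%nat then x i else x k + U else 0)).
  - apply A; auto.
    + intros. rewrite Rminus_diag, Rabs_R0. lra.
    + intros k Hk Hki _. rewrite Hu. replace (U + b k i - U) with (b k i) by ring.
      apply Rabs_le_iff. apply Hb. apply in_nbrs'. auto.
    + lra.
  - rewrite Sn_const. unfold ind.
    rewrite (Sn_ext n (fun k => if true then if (k =? i)%nat then x i else x k + U else 0) (fun k => (x k + U) + (- U) * ind (k =? i)%nat)).
    + rewrite Sn_plus, Sn_plus, Sn_const, Sn_scal, Sn_ind by auto. field. lra.
    + intros k Hk. unfold ind. destruct (Nat.eqb_spec k i); [subst|]; ring.
Qed.

Lemma Sn_bounds n F lo hi : (forall k, (k < n)%nat -> lo <= F k <= hi) ->
  INR n * lo <= Sn n F <= INR n * hi.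
Proof.
  intros H. rewrite <- !Sn_const. split; apply Sn_le; intros k Hk; specialize (H k Hk); lra.
Qed.

Lemma interval_step n w r x u b i m B q dl :
  (i < n)%nat -> 0 <= r i -> 0 < w i < 1 -> 1 - w i <= q -> 0 <= dl ->
  (forall k, (k < n)%nat -> m <= x k <= m + B) ->
  (forall k, u k i = 0) ->
  (forall k, In k (nbrs' n r x i) -> - dl <= b k i <= dl) ->
  let xb := Sn n x / INR n in
  xb - q * (xb - m + dl) <= arg n w r x u b i <= xb - q * (xb - m + dl) + q * (B + 2 * dl).
Proof.
  intros Hi Hr Hw Hq Hd Hx Hu Hb xb.
  assert (Hn : 0 < INR n) by (apply lt_0_INR; lia).
  rewrite arg_S by auto. fold xb.
  set (N := Sn n (fun k => ind (is_nbr r x i k))).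
  assert (HN : 1 <= N) by (apply Sn_ind_ge1 with i; auto; apply is_nbr_self; auto).
  set (Q := Sn n _).
  assert (HQ : N * (m - dl) <= Q <= N * (m + B + dl)).
  { unfold Q, N. rewrite !(Rmult_comm (Sn _ _)), <- !Sn_scal. split; apply Sn_le;
    intros k Hk; unfold ind; destruct (is_nbr r x i k) eqn:E; try lra;
    destruct (Nat.eqb_spec k i); [subst; specialize (Hx i Hk); lra| |subst; specialize (Hx i Hk); lra|];
    rewrite Hu; specialize (Hx k Hk); assert (Hbk : - dl <= b k i <= dl) by (apply Hb, in_nbrs'; auto); lra. }
  assert (Hxb : m <= xb <= m + B).
  { pose proof (Sn_bounds n x m (m + B) Hx). unfold xb. split.
    - apply Rmult_le_reg_r with (INR n); auto. field_simplify; lra.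
    - apply Rmult_le_reg_r with (INR n); auto. field_simplify; lra. }
  assert (HQN : m - dl <= Q / N <= m + B + dl).
  { split; apply Rmult_le_reg_r with N; try lra; field_simplify; lra. }
  replace (w i * xb + (1 - w i) / N * Q) with (xb + (1 - w i) * (Q / N - xb)) by (field; lra).
  split; nra.
Qed.


Lemma dist_bound (xk xi E rho sg : R) : (sg = 1 \/ sg = -1) -> 0 <= E ->
  Rabs (xk - xi - (- sg * E)) <= 2 * rho ->
  E - 2 * rho <= Rabs (xk - xi) <= E + 2 * rho.
Proof.
  intros Hs HE H. apply Rabs_le_iff in H.
  destruct Hs as [-> | ->]; unfold Rabs; destruct Rcase_abs; lra.
Qed.

Lemma ind_eqb_neq k i : k <> i -> ind (k =? i)%nat = 0.
Proof. intros. unfold ind. destruct (Nat.eqb_spec k i); [lia|auto]. Qed.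
Lemma ind_eqb_eq k : ind (k =? k)%nat = 1.
Proof. unfold ind. rewrite Nat.eqb_refl. auto. Qed.

Lemma stepB n w r x u b i j sg c0 th rho dl eta :
  (3 <= n)%nat -> (i < n)%nat -> (j < n)%nat -> i <> j -> 0 < r i ->
  0 < w i < 1 -> 0 < w j < 1 -> 0 < eta -> (sg = 1 \/ sg = -1) ->
  0 <= rho -> 0 <= dl -> 0 <= th -> th <= a_ n w eta i -> th <= a_ n w eta j -> 2 * rho <= th ->
  (r i < a_ n w eta i -> th + 2 * rho < a_ n w eta i - r i) ->
  (r i < aa_ n w eta i j -> 2 * th + 2 * rho < aa_ n w eta i j - r i) ->
  (forall k, (k < n)%nat -> Rabs (x k - (if (k =? i)%nat then c0 + sg * (a_ n w eta i - th)
        else if (k =? j)%nat then c0 - sg * (a_ n w eta j - th) else c0)) <= rho) ->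
  (forall k, u k i = sg * (eta - dl)) ->
  (forall k, In k (nbrs' n r x i) -> - dl <= b k i <= dl) ->
  h_ n w r eta i j - th - (rho + 2 * dl) <= sg * (arg n w r x u b i - c0).
Proof.
  intros Hn Hi Hj Hij Hr Hwi Hwj Heta Hsg Hrho Hdl Hth Hthi Hthj Hrth G1 G2 Hx Hu Hb.
  unfold h_. cbv zeta. unfold aa_ in *.
  set (ai := a_ n w eta i) in *. set (aj := a_ n w eta j) in *.
  set (z := fun k => if (k =? i)%nat then c0 + sg * (ai - th)
        else if (k =? j)%nat then c0 - sg * (aj - th) else c0).
  assert (Hz : forall k, (k < n)%nat -> Rabs (x k - z k) <= rho) by (intros k Hk; apply Hx; auto).
  assert (HnR : 3 <= INR n) by (replace 3 with (INR 3) by (simpl; ring); apply le_INR; auto).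
  assert (Hai : 0 < ai) by (unfold ai, a_; apply Rdiv_lt_0_compat; [|lra];
     apply Rmult_lt_0_compat; [apply Rmult_lt_0_compat|]; lra).
  assert (Haj : 0 < aj) by (unfold aj, a_; apply Rdiv_lt_0_compat; [|lra];
     apply Rmult_lt_0_compat; [apply Rmult_lt_0_compat|]; lra).
  assert (Dii : Rabs (x i - x i) <= r i) by (rewrite Rminus_diag, Rabs_R0; lra).
  assert (Doth : forall k, (k < n)%nat -> k <> i -> k <> j ->
     ai - th - 2 * rho <= Rabs (x k - x i) <= ai - th + 2 * rho).
  { intros k Hk Hki Hkj. apply dist_bound with sg; auto; [lra|].
    pose proof (Hz k Hk) as A. pose proof (Hz i Hi) as B. unfold z in A, B.
    rewrite Nat.eqb_refl in B. destruct (Nat.eqb_spec k i); [lia|].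
    destruct (Nat.eqb_spec k j); [lia|].
    apply Rabs_le_iff in A. apply Rabs_le_iff in B. apply Rabs_le_iff. nra. }
  assert (Dj : ai + aj - 2 * th - 2 * rho <= Rabs (x j - x i) <= ai + aj - 2 * th + 2 * rho).
  { apply dist_bound with sg; auto; [lra|].
    pose proof (Hz j Hj) as A. pose proof (Hz i Hi) as B. unfold z in A, B.
    rewrite Nat.eqb_refl in A, B. destruct (Nat.eqb_spec j i); [lia|].
    apply Rabs_le_iff in A. apply Rabs_le_iff in B. apply Rabs_le_iff. nra. }
  assert (HU : forall (p : nat -> bool), (forall k, (k < n)%nat -> is_nbr r x i k = p k) ->
     forall k, (k < n)%nat -> k <> i -> p k = true ->
     Rabs (u k i + b k i - sg * eta) <= 2 * dl).
  { intros p Hp k Hk Hki Hpk. rewrite Hu. apply Rabs_le_iff.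
    assert (Hin : In k (nbrs' n r x i)) by (apply in_nbrs'; rewrite Hp; auto).
    specialize (Hb k Hin); destruct Hsg as [-> | ->]; lra. }
  assert (Sz : Sn n z = INR n * c0 + sg * (ai - th) + - sg * (aj - th)).
  { rewrite <- Sn_lin3 with (i := i) (j := j) by auto. apply Sn_ext. intros k Hk.
    unfold z, ind. destruct (Nat.eqb_spec k i), (Nat.eqb_spec k j); subst; try lia; ring. }
  assert (Fin : forall A V K e, Rabs (A - V) <= e -> sg * (V - c0) = K -> K - e <= sg * (A - c0)).
  { intros A V K e HA HK. apply Rabs_le_iff in HA. destruct Hsg as [-> | ->]; lra. }
  assert (Hw1 : 0 < 1 - w i) by lra.
  destruct (Rlt_dec (r i) ai) as [C1|C1]; [|destruct (Rlt_dec (r i) (ai + aj)) as [C2|C2]].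
  -
    assert (Hp : forall k, (k < n)%nat -> is_nbr r x i k = (k =? i)%nat).
    { intros k Hk. destruct (Nat.eqb_spec k i). subst; apply is_nbr_self; lra.
      unfold is_nbr. destruct Rle_dec as [R|R]; auto.
      destruct (Nat.eq_dec k j). subst. specialize (G2 ltac:(lra)). lra.
      specialize (Doth k Hk n0 n1). specialize (G1 C1). lra. }
    pose proof (approx n w r x u b i z _ rho (sg * eta) (2 * dl) (ltac:(lra)) Hi Hwi Hp Hz (HU _ Hp) Hrho ltac:(lra)) as A.
    rewrite Sz, Sn_ind in A by auto.
    rewrite (Sn_ext n _ (fun k => 0 + z i * ind (k =? i)%nat + 0 * ind (k =? j)%nat)) in A.
    2:{ intros k Hk. unfold ind. destruct (Nat.eqb_spec k i); subst; ring. }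
    rewrite Sn_lin3 in A by auto.
    apply Rle_trans with ((INR n - 1) * eta / INR n * ((1 - w i) ^ 2 + w i * (w j - w i) / INR n)
       - (1 - w i) * th - (rho + 2 * dl)); [nra|].
    apply (Fin _ _ _ _ A). unfold z. rewrite Nat.eqb_refl. unfold ai, aj, a_.
    destruct Hsg as [-> | ->]; field; lra.
  -
    assert (Hp : forall k, (k < n)%nat -> is_nbr r x i k = negb (k =? j)%nat).
    { intros k Hk. destruct (Nat.eqb_spec k j).
      - subst. unfold is_nbr. destruct Rle_dec as [R|R]; auto. specialize (G2 C2). exfalso; lra.
      - simpl. destruct (Nat.eqb_spec k i). subst; apply is_nbr_self; lra.
        apply is_nbr_iff. specialize (Doth k Hk n1 n0). lra. }
    pose proof (approx n w r x u b i z _ rho (sg * eta) (2 * dl) (ltac:(lra)) Hi Hwi Hp Hz (HU _ Hp) Hrho ltac:(lra)) as A.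
    rewrite Sz in A.
    rewrite (Sn_ext n (fun k => ind (negb (k =? j)%nat)) (fun k => 1 + 0 * ind (k =? i)%nat + (-1) * ind (k =? j)%nat)) in A.
    2:{ intros k Hk. unfold ind. destruct (Nat.eqb_spec k i), (Nat.eqb_spec k j); subst; try lia; simpl; ring. }
    rewrite (Sn_ext n (fun k => if negb (k =? j)%nat then _ else 0)
      (fun k => (c0 + sg * eta) + (z i - c0 - sg * eta) * ind (k =? i)%nat + (- (c0 + sg * eta)) * ind (k =? j)%nat)) in A.
    2:{ intros k Hk. unfold ind. destruct (Nat.eqb_spec k i), (Nat.eqb_spec k j); subst; try lia; simpl.
        ring. ring. unfold z. destruct (Nat.eqb_spec k i); [lia|]. destruct (Nat.eqb_spec k j); [lia|]. ring. }
    rewrite !Sn_lin3 in A by auto.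
    apply Rle_trans with ((1 - w i) * eta * ((1 - w i) / INR n + (INR n - 2) / (INR n - 1)) + w i * (INR n - 1) * (w j - w i) * eta / INR n ^ 2
       - (1 - w i) / (INR n - 1) * th - (rho + 2 * dl)).
    { assert ((1 - w i) / (INR n - 1) * th <= th); [|lra].
      apply Rle_trans with (1 * th); [|lra]. apply Rmult_le_compat_r; auto.
      apply Rmult_le_reg_r with (INR n - 1); [lra|]. unfold Rdiv. rewrite Rmult_assoc, Rinv_l by lra. lra. }
    apply (Fin _ _ _ _ A). unfold z. rewrite Nat.eqb_refl. unfold ai, aj, a_.
    destruct Hsg as [-> | ->]; field; lra.
  -
    assert (Hp : forall k, (k < n)%nat -> is_nbr r x i k = true).
    { intros k Hk. destruct (Nat.eqb_spec k j).
      - subst. apply is_nbr_iff. lra.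
      - destruct (Nat.eqb_spec k i). subst; apply is_nbr_self; lra.
        apply is_nbr_iff. specialize (Doth k Hk n1 n0). lra. }
    pose proof (approx n w r x u b i z _ rho (sg * eta) (2 * dl) (ltac:(lra)) Hi Hwi Hp Hz (HU _ Hp) Hrho ltac:(lra)) as A.
    rewrite Sz, Sn_const in A. unfold ind in A at 1.
    rewrite (Sn_ext n (fun k => if true then _ else 0)
      (fun k => (c0 + sg * eta) + (z i - c0 - sg * eta) * ind (k =? i)%nat + (- sg * (aj - th)) * ind (k =? j)%nat)) in A.
    2:{ intros k Hk. unfold ind. destruct (Nat.eqb_spec k i), (Nat.eqb_spec k j); subst; try lia; simpl.
        ring. unfold z. destruct (Nat.eqb_spec j i); [lia|]. rewrite Nat.eqb_refl. ring.
        unfold z. destruct (Nat.eqb_spec k i); [lia|]. destruct (Nat.eqb_spec k j); [lia|]. ring. }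
    rewrite !Sn_lin3 in A by auto.
    apply Rle_trans with ((INR n - 1) * eta / INR n * (1 - w i + (w j - w i) / INR n) - 0 - (rho + 2 * dl)); [lra|].
    apply (Fin _ _ _ _ A). unfold z. rewrite Nat.eqb_refl. unfold ai, aj, a_.
    destruct Hsg as [-> | ->]; field; lra.
Qed.


Lemma two_final ai aj hij hji : 0 <= ai -> 0 <= aj -> ai + aj <= 1 ->
  let c0 := Rmax aj (Rmin (1 - ai) hji) in
  Rmin (hij + hji) (1 - excess ai hij - excess aj hji) <= proj01 (c0 + hij) - proj01 (c0 - hji).
Proof.
  intros H1 H2 H3 c0. unfold c0, proj01, excess, Rmin, Rmax.
  repeat (destruct Rle_dec || destruct Rlt_dec); lra.
Qed.

Lemma one_final ai aj : 0 <= ai -> 0 <= aj -> 1 < ai + aj ->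
  let c0 := Rmin aj 1 in proj01 (c0 + ai) - proj01 (c0 - aj) = 1.
Proof.
  intros H1 H2 H3 c0. unfold c0, proj01, Rmin, Rmax.
  repeat (destruct Rle_dec || destruct Rlt_dec); lra.
Qed.

Lemma c_le_1 n w r eta i j : c_ n w r eta i j <= 1.
Proof.
  unfold c_, excess, Rmin. repeat (destruct Rle_dec || destruct Rlt_dec); lra.
Qed.


Lemma min_pos (f : nat -> R) n : (forall k, (k < n)%nat -> 0 < f k) ->
  exists m, 0 < m /\ forall k, (k < n)%nat -> m <= f k.
Proof.
  induction n; intros H.
  - exists 1. split; [lra|]. intros; lia.
  - destruct IHn as [m [Hm Hk]]. intros; apply H; lia.
    exists (Rmin m (f n)). split. apply Rmin_glb_lt; auto; apply H; lia.
    intros k Hk'. destruct (Nat.eq_dec k n). subst; apply Rmin_r.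
    eapply Rle_trans; [apply Rmin_l|]. apply Hk; lia.
Qed.

Lemma fold_Rmax_in d l : In (fold_right Rmax d l) (d :: l).
Proof.
  induction l; simpl; [auto|]. destruct (Rle_dec a (fold_right Rmax d l)).
  - rewrite Rmax_right by auto. destruct IHl; auto.
  - rewrite Rmax_left by lra. right; left; auto.
Qed.

Lemma fold_Rmax_ge d l v : In v l -> v <= fold_right Rmax d l.
Proof.
  induction l; simpl; [tauto|]. intros [->|H].
  - apply Rmax_l.
  - eapply Rle_trans; [apply IHl; auto|apply Rmax_r].
Qed.

Lemma cmax_arg n w r eta : (2 <= n)%nat ->
  exists i j, (i < n)%nat /\ (j < n)%nat /\ i <> j /\ cmax n w r eta = c_ n w r eta i j.
Proof.
  intros Hn. unfold cmax. destruct (fold_Rmax_in (c_ n w r eta 0 1)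
   (flat_map (fun i => map (fun j => c_ n w r eta i j)
         (filter (fun j => negb (j =? i)%nat) (seq 0 n))) (seq 0 n))) as [H|H].
  - exists 0%nat, 1%nat. repeat split; try lia. auto.
  - apply in_flat_map in H. destruct H as [i [Hi H]]. apply in_map_iff in H.
    destruct H as [j [Hc Hj]]. apply filter_In in Hj. destruct Hj as [Hj Hji].
    apply in_seq in Hi. apply in_seq in Hj. exists i, j. repeat split; try lia.
    + intro E. subst. rewrite Nat.eqb_refl in Hji. discriminate.
    + auto.
Qed.

Lemma maxdiff_ge n x i j : (i < n)%nat -> (j < n)%nat -> Rabs (x i - x j) <= maxdiff n x.
Proof.
  intros Hi Hj. unfold maxdiff. apply fold_Rmax_ge. apply in_flat_map. exists i.
  split; [apply in_seq; lia|]. apply in_map_iff. exists j. split; auto. apply in_seq; lia.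
Qed.

Lemma traj_S n w r x0 ctrl b t :
  traj n w r x0 ctrl b (S t) = step n w r (traj n w r x0 ctrl b t)
     (ctrl (traj_hist n w r x0 ctrl b t)) (b t).
Proof. reflexivity. Qed.

Lemma hist_len n w r x0 ctrl b t : length (traj_hist n w r x0 ctrl b t) = S t.
Proof. induction t; simpl; auto. Qed.

Lemma hist_hd n w r x0 ctrl b t d : hd d (traj_hist n w r x0 ctrl b t) = traj n w r x0 ctrl b t.
Proof. unfold traj. destruct t; reflexivity. Qed.

Lemma mean_bounds n (x : state) lo hi : (0 < n)%nat -> (forall k, (k < n)%nat -> lo <= x k <= hi) ->
  lo <= Sn n x / INR n <= hi.
Proof.
  intros Hn H. assert (0 < INR n) by (apply lt_0_INR; lia).
  pose proof (Sn_bounds n x lo hi H). split.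
  - apply Rmult_le_reg_r with (INR n); auto. field_simplify; lra.
  - apply Rmult_le_reg_r with (INR n); auto. field_simplify; lra.
Qed.

Definition sclamp (sm v : R) := Rmax (- sm) (Rmin sm v).

Lemma sclamp_bound sm xb c0 : 0 <= sm ->
  Rabs (xb + sclamp sm (c0 - xb) - c0) <= Rmax 0 (Rabs (c0 - xb) - sm).
Proof.
  intros. unfold sclamp, Rmax, Rmin, Rabs.
  repeat (destruct Rle_dec || destruct Rcase_abs); lra.
Qed.

Lemma sclamp_abs sm v : 0 <= sm -> Rabs (sclamp sm v) <= sm.
Proof. intros. unfold sclamp, Rmax, Rmin, Rabs. repeat (destruct Rle_dec || destruct Rcase_abs); lra. Qed.

Lemma sclamp_between sm xb c0 : 0 <= sm -> 0 <= xb <= 1 -> 0 <= c0 <= 1 ->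
  0 <= xb + sclamp sm (c0 - xb) <= 1.
Proof. intros. unfold sclamp, Rmax, Rmin. repeat destruct Rle_dec; lra. Qed.

Lemma a_pos n w eta i : (2 <= n)%nat -> 0 < w i < 1 -> 0 < eta -> 0 < a_ n w eta i.
Proof.
  intros Hn Hw He. assert (2 <= INR n) by (replace 2 with (INR 2) by (simpl; ring); apply le_INR; auto).
  unfold a_. apply Rdiv_lt_0_compat; [|lra]. apply Rmult_lt_0_compat; [apply Rmult_lt_0_compat|]; lra.
Qed.

Lemma a_le_eta n w eta i : (2 <= n)%nat -> 0 < w i < 1 -> 0 < eta -> a_ n w eta i <= eta.
Proof.
  intros Hn Hw He. assert (2 <= INR n) by (replace 2 with (INR 2) by (simpl; ring); apply le_INR; auto).
  unfold a_. apply Rmult_le_reg_r with (INR n); [lra|]. unfold Rdiv. rewrite Rmult_assoc, Rinv_l by lra.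
  assert (A1 : (1 - w i) * eta <= eta) by nra.
  assert (A2 : (INR n - 1) * ((1 - w i) * eta) <= (INR n - 1) * eta) by (apply Rmult_le_compat_l; lra).
  nra.
Qed.


Definition Uc (n : nat) (w : nat -> R) (eta : R) (T1 T2 : nat) (c0 sm th dl : R) (i0 j0 : nat)
  (L : nat) (x : state) (i : nat) : R :=
  if (L <=? T1)%nat then 0
  else if (L <=? T1 + T2)%nat then sclamp sm (c0 - xave n x) * eta / a_ n w eta i
  else if (L =? T1 + T2 + 1)%nat then
     (if (i =? i0)%nat then eta * (1 - th / a_ n w eta i0)
      else if (i =? j0)%nat then - (eta * (1 - th / a_ n w eta j0)) else 0)
  else (if (i =? i0)%nat then eta - dl else if (i =? j0)%nat then - (eta - dl) else 0).

Lemma gap_ex (x y : R) : exists g, 0 < g /\ (x < y -> g <= y - x).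
Proof. destruct (Rlt_dec x y). exists (y - x). lra. exists 1. lra. Qed.

Theorem lemma9 (n : nat) (r w : nat -> R) (eta eps : R) :
  (3 <= n)%nat ->
  (forall i, (i < n)%nat -> 0 < r i <= 1) ->
  (forall i, (i < n)%nat -> 0 < w i < 1) ->
  0 < eta ->
  0 < eps ->
  robustly_reachable n w r eta (E_set n (cmax n w r eta - eps)).
Proof.
  intros Hn Hr Hw Heta Heps.
  destruct (cmax_arg n w r eta ltac:(lia)) as (i0 & j0 & Hi0 & Hj0 & Hij & Hc).
  destruct (min_pos w n) as (wm & Hwm & Hwmk). { intros; apply Hw; auto. }
  destruct (min_pos (a_ n w eta) n) as (amin & Ham & Hamk). { intros; apply a_pos; auto; lia. }
  destruct (min_pos r n) as (rmin & Hrm & Hrmk). { intros; apply Hr; auto. }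
  assert (Hwm1 : wm < 1) by (pose proof (Hwmk 0%nat ltac:(lia)); pose proof (Hw 0%nat ltac:(lia)); lra).
  set (ai := a_ n w eta i0) in *. set (aj := a_ n w eta j0) in *.
  assert (Hai : 0 < ai) by (apply a_pos; auto; lia).
  assert (Haj : 0 < aj) by (apply a_pos; auto; lia).
  destruct (gap_ex (r i0) ai) as (g1 & Hg1 & G1).
  destruct (gap_ex (r i0) (ai + aj)) as (g2 & Hg2 & G2).
  destruct (gap_ex (r j0) aj) as (g3 & Hg3 & G3).
  destruct (gap_ex (r j0) (aj + ai)) as (g4 & Hg4 & G4).
  set (G := Rmin (Rmin g1 g2) (Rmin g3 g4)).
  assert (HG : 0 < G /\ G <= g1 /\ G <= g2 /\ G <= g3 /\ G <= g4).
  { unfold G, Rmin. repeat destruct Rle_dec; lra. }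
  set (th := Rmin (Rmin G amin) eps / 8).
  assert (Hth : 0 < th /\ th <= G / 8 /\ th <= amin / 8 /\ th <= eps / 8).
  { unfold th, Rmin. repeat destruct Rle_dec; lra. }
  set (dl := Rmin (Rmin (th / 8) (eta / 2)) (Rmin (rmin * wm / 4) (amin / 4))).
  assert (Hdl : 0 < dl /\ dl <= th / 8 /\ dl <= eta / 2 /\ dl <= rmin * wm / 4 /\ dl <= amin / 4).
  { assert (0 < rmin * wm) by nra. unfold dl, Rmin. repeat destruct Rle_dec; lra. }
  destruct HG as (HG0 & HG1 & HG2 & HG3 & HG4).
  destruct Hth as (Hth0 & Hth1 & Hth2 & Hth3).
  destruct Hdl as (Hdl0 & Hdl1 & Hdl2 & Hdl3 & Hdl4).
  assert (Hdlr : dl <= rmin / 4) by nra.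
  set (q := 1 - wm).
  destruct (pow_lt_1_zero q ltac:(unfold q; rewrite Rabs_right; lra) (rmin / 2) ltac:(lra)) as [T1 HT1].
  destruct (archimed_cor1 (amin / 4) ltac:(lra)) as [T2 [HT2a HT2b]].
  set (hij := h_ n w r eta i0 j0). set (hji := h_ n w r eta j0 i0).
  set (c0 := if Rlt_dec 1 (ai + aj) then Rmin aj 1 else Rmax aj (Rmin (1 - ai) hji)).
  assert (Hc0 : 0 <= c0 <= 1).
  { unfold c0. destruct Rlt_dec; unfold Rmin, Rmax; repeat destruct Rle_dec; lra. }
  set (sm := amin / 2).
  set (U := Uc n w eta T1 T2 c0 sm th dl i0 j0).
  exists (T1 + T2 + 2)%nat, dl.
  split; [lia|]. split; [lra|].
  intros x0 Hx0. right.
  exists (fun _ _ => dl), (fun h k i => U (length h) (hd (fun _ => 0) h) i).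
  split; [intros; lra|].
  split.
  { intros h i k Hi Hk. unfold U, Uc. set (L := length h).
    assert (Hai' : amin <= a_ n w eta i) by auto.
    assert (Hae : a_ n w eta i <= eta) by (apply a_le_eta; auto; lia).
    assert (Hai0 : amin <= ai) by (apply Hamk; auto).
    assert (Haj0 : amin <= aj) by (apply Hamk; auto).
    assert (Hae0 : ai <= eta) by (apply a_le_eta; auto; lia).
    assert (Hae1 : aj <= eta) by (apply a_le_eta; auto; lia).
    destruct (@length (nat -> R) h <=? T1)%nat; [lra|]. destruct (@length (nat -> R) h <=? T1 + T2)%nat.
    - set (s := sclamp sm (c0 - xave n (hd (fun _ => 0) h))).
      assert (Hs : Rabs s <= sm) by (apply sclamp_abs; unfold sm; lra).
      apply Rabs_le_iff in Hs. set (a := a_ n w eta i) in *.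
      assert (Ha : 0 < a) by lra.
      set (t := s / a). assert (Ht : t * a = s) by (unfold t; field; lra).
      replace (s * eta / a) with (t * eta) by (unfold t; field; lra).
      unfold sm in Hs.
      assert (t <= 1/2).
      { destruct (Rle_dec t (1/2)); auto. assert ((t - 1/2) * a > 0) by (apply Rmult_gt_0_compat; lra). nra. }
      assert (-1/2 <= t).
      { destruct (Rle_dec (-1/2) t); auto. assert ((-1/2 - t) * a > 0) by (apply Rmult_gt_0_compat; lra). nra. }
      split; nra.
    - fold ai aj. destruct (@length (nat -> R) h =? T1 + T2 + 1)%nat.
      + set (t1 := th / ai). assert (Ht1 : t1 * ai = th) by (unfold t1; field; lra).
        set (t2 := th / aj). assert (Ht2 : t2 * aj = th) by (unfold t2; field; lra).
        assert (0 <= t1 <= 1) by (split; nra). assert (0 <= t2 <= 1) by (split; nra).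
        assert (eta * t1 >= th) by nra. assert (eta * t2 >= th) by nra.
        destruct (i =? i0)%nat; [split; nra|]. destruct (i =? j0)%nat; split; nra.
      + destruct (i =? i0)%nat; [lra|]. destruct (i =? j0)%nat; lra. }
  intros b Hb.
  set (X := traj n w r x0 (fun h k i => U (length h) (hd (fun _ => 0) h) i) b).
  assert (HX : forall t, X (S t) = step n w r (X t) (fun k i => U (S t) (X t) i) (b t)).
  { intros t. unfold X. rewrite traj_S. cbv beta. rewrite hist_len, hist_hd. reflexivity. }
  assert (Hbt : forall t i k, (t < T1 + T2 + 2)%nat -> (i < n)%nat -> In k (nbrs' n r (X t) i) ->
     - dl <= b t k i <= dl) by (intros; apply Hb; auto).
  assert (Hin : forall t k, (k < n)%nat -> 0 <= X t k <= 1).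
  { intros [|t] k Hk. apply Hx0; auto. rewrite HX, step_arg. apply P_in. }
  assert (Hq : 0 < q < 1) by (unfold q; lra).
  assert (Ph1 : forall t, (t <= T1)%nat -> exists m, forall k, (k < n)%nat ->
      m <= X t k <= m + (q ^ t + 2 * dl / wm)).
  { induction t; intros Ht.
    - exists 0. intros k Hk. pose proof (Hx0 k Hk). simpl.
      assert (0 <= 2 * dl / wm) by (apply Rle_mult_inv_pos; lra). change (X 0%nat k) with (x0 k). lra.
    - destruct IHt as [m Hm]; [lia|].
      set (xb := Sn n (X t) / INR n).
      exists (proj01 (xb - q * (xb - m + dl))). intros k Hk. rewrite HX, step_arg.
      assert (Hwk : wm <= w k) by auto.
      pose proof (interval_step n w r (X t) (fun k0 i => U (S t) (X t) i) (b t) k m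
        (q ^ t + 2 * dl / wm) q dl Hk ltac:(pose proof (Hr k Hk); lra) (Hw k Hk)
        ltac:(unfold q; lra) ltac:(lra) Hm) as I.
      simpl in I. fold xb in I.
      destruct I as [I1 I2].
      + intros k0. unfold U, Uc. replace (S t <=? T1)%nat with true; auto.
        symmetry. apply Nat.leb_le. auto.
      + intros k0 Hk0. apply Hbt; auto. lia.
      + split. apply P_mono; auto.
        assert (Hqt : 0 <= q ^ t) by (apply pow_le; lra).
        assert (Hd : 0 <= 2 * dl / wm) by (apply Rle_mult_inv_pos; lra).
        eapply Rle_trans; [apply P_mono; apply I2|].
        eapply Rle_trans; [apply P_up; nra|].
        assert (E : dl = (dl / wm) * wm) by (field; lra).
        simpl. unfold q. unfold q in Hqt.
        assert (0 <= dl / wm) by (apply Rle_mult_inv_pos; lra).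
        replace (2 * dl / wm) with (2 * (dl / wm)) by (field; lra).
        rewrite E at 2. nra. }
  assert (HnR : 3 <= INR n) by (replace 3 with (INR 3) by (simpl; ring); apply le_INR; auto).
  assert (Full : forall t l, (forall k m, (k < n)%nat -> (m < n)%nat -> Rabs (X t k - X t m) <= rmin) ->
      (l < n)%nat -> forall k, (k < n)%nat -> is_nbr r (X t) l k = true).
  { intros t l Hs Hl k Hk. apply is_nbr_iff. eapply Rle_trans; [apply Hs; auto|]. auto. }
  assert (Move : forall t, (T1 <= t < T1 + T2)%nat ->
     (forall k m, (k < n)%nat -> (m < n)%nat -> Rabs (X t k - X t m) <= rmin) ->
     forall l, (l < n)%nat -> Rabs (X (S t) l - (Sn n (X t) / INR n + sclamp sm (c0 - Sn n (X t) / INR n))) <= dl).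
  { intros t Ht Hs l Hl. rewrite HX, step_arg.
    set (xb := Sn n (X t) / INR n).
    assert (Hxb : 0 <= xb <= 1) by (apply mean_bounds; [lia|]; intros; apply Hin; auto).
    apply P_near. apply sclamp_between; auto; unfold sm; lra.
    set (s := sclamp sm (c0 - xb)).
    assert (Hal : 0 < a_ n w eta l) by (apply a_pos; auto; lia).
    pose proof (full_step n w r (X t) (fun k i => U (S t) (X t) i) (b t) l (s * eta / a_ n w eta l) dl Hl
       ltac:(pose proof (Hr l Hl); lra) (Hw l Hl) ltac:(lra) (Full t l Hs Hl)) as F.
    fold xb in F.
    replace ((1 - w l) * (INR n - 1) / INR n * (s * eta / a_ n w eta l)) with s in F.
    - apply F.
      + intros k. unfold U, Uc. replace (S t <=? T1)%nat with false by (symmetry; apply Nat.leb_gt; lia).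
        replace (S t <=? T1 + T2)%nat with true by (symmetry; apply Nat.leb_le; lia). reflexivity.
      + intros k Hk. apply Hbt; auto. lia.
    - unfold a_ in *. pose proof (Hw l Hl). field. repeat split; lra. }
  assert (HT2 : 1 < INR T2 * (amin / 4)).
  { assert (0 < INR T2) by (apply lt_0_INR; lia).
    apply Rmult_lt_reg_l with (/ INR T2). apply Rinv_0_lt_compat; auto.
    rewrite <- Rmult_assoc, Rinv_l, Rmult_1_l, Rmult_1_r by lra. lra. }
  assert (Ph2 : forall k, (1 <= k <= T2)%nat -> exists y, 0 <= y <= 1 /\
     (forall l, (l < n)%nat -> Rabs (X (T1 + k)%nat l - y) <= dl) /\
     Rabs (y - c0) <= Rmax 0 (1 - INR k * (amin / 4))).
  { induction k; intros Hk; [lia|].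
    destruct (Nat.eq_dec k 0).
    - subst k. destruct (Ph1 T1 (le_n _)) as [m Hm].
      assert (HB : q ^ T1 + 2 * dl / wm <= rmin).
      { specialize (HT1 T1 (le_n _)). rewrite Rabs_right in HT1 by (apply Rle_ge, pow_le; lra).
        assert (2 * dl / wm <= rmin / 2); [|lra].
        apply Rmult_le_reg_r with wm; auto. replace (2 * dl / wm * wm) with (2 * dl) by (field; lra). lra. }
      set (xb := Sn n (X T1) / INR n).
      assert (Hxb : 0 <= xb <= 1) by (apply mean_bounds; [lia|]; intros; apply Hin; auto).
      exists (xb + sclamp sm (c0 - xb)). split; [apply sclamp_between; auto; unfold sm; lra|]. split.
      + intros l Hl. replace (T1 + 1)%nat with (S T1) by lia. apply Move; auto. lia.
        intros k m0 Hk1 Hm0. pose proof (Hm k Hk1). pose proof (Hm m0 Hm0). apply Rabs_le_iff. lra.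
      + eapply Rle_trans; [apply sclamp_bound; unfold sm; lra|].
        assert (Rabs (c0 - xb) <= 1) by (apply Rabs_le_iff; lra).
        simpl INR. unfold sm, Rmax. repeat destruct Rle_dec; lra.
    - destruct IHk as (y & Hy & Hyl & Hyc); [lia|].
      set (xb := Sn n (X (T1 + k)%nat) / INR n).
      assert (Hxb : 0 <= xb <= 1) by (apply mean_bounds; [lia|]; intros; apply Hin; auto).
      assert (Hxy : y - dl <= xb <= y + dl).
      { apply mean_bounds; [lia|]. intros l Hl. specialize (Hyl l Hl). apply Rabs_le_iff in Hyl. lra. }
      exists (xb + sclamp sm (c0 - xb)). split; [apply sclamp_between; auto; unfold sm; lra|]. split.
      + intros l Hl. replace (T1 + S k)%nat with (S (T1 + k)) by lia. apply Move; auto. lia.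
        intros k0 m0 Hk0 Hm0. pose proof (Hyl k0 Hk0). pose proof (Hyl m0 Hm0).
        apply Rabs_le_iff in H. apply Rabs_le_iff in H0. apply Rabs_le_iff. lra.
      + eapply Rle_trans; [apply sclamp_bound; unfold sm; lra|].
        rewrite S_INR. apply Rabs_le_iff in Hyc.
        assert (Hcx : Rabs (c0 - xb) <= Rmax 0 (1 - INR k * (amin / 4)) + dl).
        { apply Rabs_le_iff. lra. }
        clear -Hcx Hdl4 Ham. unfold sm. revert Hcx. generalize (Rabs (c0 - xb)). intros v Hv.
        unfold Rmax in *. repeat destruct Rle_dec; lra. }
  destruct (Ph2 T2 ltac:(lia)) as (y & Hy & HyA & Hyc).
  assert (Hyc0 : y = c0).
  { unfold Rmax in Hyc. destruct Rle_dec; [lra|]. apply Rabs_le_iff in Hyc. lra. }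
  subst y. set (tA := (T1 + T2)%nat) in *.
  set (d := fun l => if (l =? i0)%nat then ai - th else if (l =? j0)%nat then - (aj - th) else 0).
  assert (HUA : forall l, U (S tA) (X tA) l = if (l =? i0)%nat then eta * (1 - th / ai)
      else if (l =? j0)%nat then - (eta * (1 - th / aj)) else 0).
  { intros l. unfold U, Uc. replace (S tA <=? T1)%nat with false by (symmetry; apply Nat.leb_gt; unfold tA; lia).
    replace (S tA <=? T1 + T2)%nat with false by (symmetry; apply Nat.leb_gt; unfold tA; lia).
    replace (S tA =? T1 + T2 + 1)%nat with true by (symmetry; apply Nat.eqb_eq; unfold tA; lia). reflexivity. }
  assert (StepA : forall l, (l < n)%nat ->
     Rabs (arg n w r (X tA) (fun k i => U (S tA) (X tA) i) (b tA) l - (c0 + d l)) <= 2 * dl).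
  { intros l Hl.
    assert (Hs : forall k m0, (k < n)%nat -> (m0 < n)%nat -> Rabs (X tA k - X tA m0) <= rmin).
    { intros k0 m0 Hk0 Hm0. pose proof (HyA k0 Hk0). pose proof (HyA m0 Hm0).
      apply Rabs_le_iff in H. apply Rabs_le_iff in H0. apply Rabs_le_iff. lra. }
    pose proof (full_step n w r (X tA) (fun k i => U (S tA) (X tA) i) (b tA) l (U (S tA) (X tA) l) dl Hl
       ltac:(pose proof (Hr l Hl); lra) (Hw l Hl) ltac:(lra) (Full tA l Hs Hl)
       (fun k => eq_refl) ltac:(intros k Hk; apply Hbt; auto; unfold tA; lia)) as F.
    assert (Hxb : c0 - dl <= Sn n (X tA) / INR n <= c0 + dl).
    { apply mean_bounds; [lia|]. intros l0 Hl0. specialize (HyA l0 Hl0). apply Rabs_le_iff in HyA. lra. }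
    replace ((1 - w l) * (INR n - 1) / INR n * U (S tA) (X tA) l) with (d l) in F.
    - apply Rabs_le_iff in F. apply Rabs_le_iff. lra.
    - rewrite HUA. unfold d. pose proof (Hw l Hl).
      destruct (Nat.eqb_spec l i0); [subst l; unfold ai, a_; field; repeat split; lra|].
      destruct (Nat.eqb_spec l j0); [subst l; unfold aj, a_; field; repeat split; lra|]. ring. }
  assert (Fin : forall t, (1 <= t <= T1 + T2 + 2)%nat -> cmax n w r eta - eps <= X t i0 - X t j0 ->
     exists t0, (1 <= t0 <= T1 + T2 + 2)%nat /\ E_set n (cmax n w r eta - eps) (X t0)).
  { intros t Ht Hd. exists t. split; auto. split.
    - intros k Hk. apply Hin; auto.
    - apply Rle_ge. eapply Rle_trans; [apply Hd|]. eapply Rle_trans; [apply Rle_abs|].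
      apply maxdiff_ge; auto. }
  assert (Hc1 : cmax n w r eta <= 1) by (rewrite Hc; apply c_le_1).
  unfold c_ in Hc. change (h_ n w r eta i0 j0) with hij in Hc. change (h_ n w r eta j0 i0) with hji in Hc.
  destruct (Rlt_dec 1 (ai + aj)) as [Big|Small].
  - assert (Ec0 : c0 = Rmin aj 1) by (unfold c0; destruct (Rlt_dec 1 (ai + aj)); [reflexivity|contradiction]).
    apply (Fin (S tA)); [unfold tA; lia|].
    rewrite !HX, !step_arg.
    pose proof (StepA i0 Hi0) as A1. pose proof (StepA j0 Hj0) as A2.
    unfold d in A1, A2. rewrite Nat.eqb_refl in A1.
    destruct (Nat.eqb_spec j0 i0); [congruence|]. rewrite Nat.eqb_refl in A2.
    apply Rabs_le_iff in A1. apply Rabs_le_iff in A2.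
    pose proof (one_final ai aj ltac:(lra) ltac:(lra) Big) as O. simpl in O. rewrite <- Ec0 in O.
    assert (B1 : proj01 (c0 + ai) - (th + 2 * dl) <= proj01 (arg n w r (X tA) (fun k i => U (S tA) (X tA) i) (b tA) i0)).
    { eapply Rle_trans; [apply P_dn; lra|]. apply P_mono. lra. }
    assert (B2 : proj01 (arg n w r (X tA) (fun k i => U (S tA) (X tA) i) (b tA) j0) <= proj01 (c0 - aj) + (th + 2 * dl)).
    { eapply Rle_trans; [|apply P_up; lra]. apply P_mono. lra. }
    lra.
  - assert (Ec0 : c0 = Rmax aj (Rmin (1 - ai) hji)) by (unfold c0; destruct (Rlt_dec 1 (ai + aj)); [contradiction|reflexivity]).
    assert (Hc0r : aj <= c0 <= 1 - ai) by (rewrite Ec0; unfold Rmax, Rmin; repeat destruct Rle_dec; lra).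
    assert (Hthai : th <= ai) by (pose proof (Hamk i0 Hi0); fold ai in H; lra).
    assert (Hthaj : th <= aj) by (pose proof (Hamk j0 Hj0); fold aj in H; lra).
    assert (Z : forall l, (l < n)%nat -> Rabs (X (S tA) l - (c0 + d l)) <= 2 * dl).
    { intros l Hl. rewrite HX, step_arg. apply P_near; [|apply StepA; auto].
      unfold d. destruct (l =? i0)%nat; [lra|]. destruct (l =? j0)%nat; lra. }
    assert (HUB : forall x l, U (S (S tA)) x l = if (l =? i0)%nat then eta - dl
        else if (l =? j0)%nat then - (eta - dl) else 0).
    { intros x l. unfold U, Uc.
      replace (S (S tA) <=? T1)%nat with false by (symmetry; apply Nat.leb_gt; unfold tA; lia).
      replace (S (S tA) <=? T1 + T2)%nat with false by (symmetry; apply Nat.leb_gt; unfold tA; lia).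
      replace (S (S tA) =? T1 + T2 + 1)%nat with false by (symmetry; apply Nat.eqb_neq; unfold tA; lia).
      reflexivity. }
    assert (Hji : (j0 =? i0)%nat = false) by (apply Nat.eqb_neq; congruence).
    pose proof (stepB n w r (X (S tA)) (fun k i => U (S (S tA)) (X (S tA)) i) (b (S tA)) i0 j0 1 c0 th
       (2 * dl) dl eta Hn Hi0 Hj0 Hij ltac:(apply Hr; auto) (Hw i0 Hi0) (Hw j0 Hj0) Heta
       ltac:(left; reflexivity) ltac:(lra) ltac:(lra) ltac:(lra) Hthai Hthaj ltac:(lra)
       ltac:(fold ai; intros Hx; specialize (G1 Hx); lra)
       ltac:(unfold aa_; fold ai aj; intros Hx; specialize (G2 Hx); lra)) as S1.
    pose proof (stepB n w r (X (S tA)) (fun k i => U (S (S tA)) (X (S tA)) i) (b (S tA)) j0 i0 (-1) c0 th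
       (2 * dl) dl eta Hn Hj0 Hi0 (not_eq_sym Hij) ltac:(apply Hr; auto) (Hw j0 Hj0) (Hw i0 Hi0) Heta
       ltac:(right; reflexivity) ltac:(lra) ltac:(lra) ltac:(lra) Hthaj Hthai ltac:(lra)
       ltac:(fold aj; intros Hx; specialize (G3 Hx); lra)
       ltac:(unfold aa_; fold ai aj; intros Hx; specialize (G4 Hx); lra)) as S2.
    assert (Hd : forall k, (k < n)%nat -> forall e : R, e = c0 + d k -> Rabs (X (S tA) k - e) <= 2 * dl).
    { intros k Hk e ->. apply Z; auto. }
    specialize (S1 ltac:(intros k Hk; apply Hd; auto; unfold d;
       destruct (k =? i0)%nat; [fold ai; ring|]; destruct (k =? j0)%nat; [fold aj; ring|ring])).
    specialize (S2 ltac:(intros k Hk; apply Hd; auto; unfold d;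
       destruct (Nat.eqb_spec k j0); [subst k; rewrite ?Hji, ?Nat.eqb_refl; fold aj; ring|];
       destruct (k =? i0)%nat; [fold ai; ring|ring])).
    specialize (S1 ltac:(intros k; cbv beta; rewrite HUB, Nat.eqb_refl; ring)).
    specialize (S2 ltac:(intros k; cbv beta; rewrite HUB, Hji, Nat.eqb_refl; ring)).
    specialize (S1 ltac:(intros k Hk; apply Hbt; auto; unfold tA; lia)).
    specialize (S2 ltac:(intros k Hk; apply Hbt; auto; unfold tA; lia)).
    fold hij in S1. fold hji in S2.
    apply (Fin (S (S tA))); [unfold tA; lia|].
    rewrite (HX (S tA)), !step_arg.
    set (A1 := arg n w r (X (S tA)) (fun k i => U (S (S tA)) (X (S tA)) i) (b (S tA)) i0) in *.
    set (A2 := arg n w r (X (S tA)) (fun k i => U (S (S tA)) (X (S tA)) i) (b (S tA)) j0) in *.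
    assert (B1 : proj01 (c0 + hij) - (th + 4 * dl) <= proj01 A1).
    { eapply Rle_trans; [apply P_dn; lra|]. apply P_mono. lra. }
    assert (B2 : proj01 A2 <= proj01 (c0 - hji) + (th + 4 * dl)).
    { eapply Rle_trans; [|apply P_up; lra]. apply P_mono. lra. }
    pose proof (two_final ai aj hij hji ltac:(lra) ltac:(lra) ltac:(lra)) as TF. simpl in TF.
    rewrite <- Ec0 in TF. rewrite Hc. change (a_ n w eta i0) with ai. change (a_ n w eta j0) with aj. lra.
Qed.
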